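(* Let $w, v \in \mathfrak{S}_n$ with $v \prec w$ in the Bruhat order, $\textsf{supp}(v) \subsetneq \textsf{supp}(w)$, and $B(w) \cong \mathbf{2} \times B(v)$, where $\mathbf{2}$ is the two-element chain, and let $i$ be the unique element of $\textsf{supp}(w) \setminus \textsf{supp}(v)$. Then the letter $i$ appears exactly once in every reduced word of $w$.
   Context: $\sigma_i$ ($1\le i\le n-1$) is the simple transposition swapping $i$ and $i+1$; products are compositions of maps. A reduced word of $w$ is a word $i_1\cdots i_\ell$ of minimal length $\ell$ with $w=\sigma_{i_1}\cdots\sigma_{i_\ell}$; $R(w)$ is the set of reduced words. $\textsf{supp}(w)$ is the set of letters appearing in (any) reduced word of $w$. Bruhat order: $v \preceq w$ iff some reduced word of $v$ is a subword of some reduced word of $w$; $B(w)=\{u : u \preceq w\}$. (It is known that under these hypotheses $\textsf{supp}(w)\setminus\textsf{supp}(v)$ is a singleton.) *)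

(* Defs.v *)
(* Permutations of {1..n} are modelled as 'S_n = {perm 'I_n},
   with point k (1-indexed) represented by the ordinal k-1. *)
From mathcomp Require Import all_boot all_fingroup.
Set Implicit Arguments. Unset Strict Implicit. Unset Printing Implicit Defensive.
Local Open Scope group_scope.

(* sigma n i : the simple transposition swapping i and i+1 (1-indexed),
   i.e. the ordinals i-1 and i; meaningful for 1 <= i <= n-1
   (identity otherwise, but words are required to use only valid letters). *)
Definition sigma (n i : nat) : 'S_n :=
  match @insub _ (fun k => k < n) _ i.-1, @insub _ (fun k => k < n) _ i with
  | Some a, Some b => tperm a b
  | _, _ => 1
  end.

Definition valid_word (n : nat) (s : seq nat) : bool :=
  all (fun i => (0 < i) && (i < n)) s.

(* word_perm n [:: i1; ...; il] = sigma_{i1} o ... o sigma_{il} (composition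
   of maps). In MathComp (p * q) x = q (p x), hence the order below. *)
Definition word_perm (n : nat) (s : seq nat) : 'S_n :=
  foldr (fun i p => p * sigma n i) 1 s.

Definition reduced_word (n : nat) (w : 'S_n) (s : seq nat) : Prop :=
  [/\ valid_word n s, word_perm n s = w &
      forall t, valid_word n t -> word_perm n t = w -> size s <= size t].

Definition in_supp (n : nat) (w : 'S_n) (i : nat) : Prop :=
  exists s, reduced_word w s /\ i \in s.

Definition bruhat_le (n : nat) (v w : 'S_n) : Prop :=
  exists sv sw, [/\ reduced_word v sv, reduced_word w sw & subseq sv sw].

Definition B (n : nat) (w : 'S_n) : 'S_n -> Prop := fun u => bruhat_le u w.

(* order on 2 x B(v): product order, 2 = {false < true} *)
Definition prod_le (n : nat) (x y : bool * 'S_n) : Prop :=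
  (x.1 ==> y.1) /\ bruhat_le x.2 y.2.

Definition iso_2_times (n : nat) (w v : 'S_n) : Prop :=
  exists f : 'S_n -> bool * 'S_n,
    [/\ (forall u, B w u -> B v (f u).2),
        (forall u1 u2, B w u1 -> B w u2 -> f u1 = f u2 -> u1 = u2),
        (forall b x, B v x -> exists2 u, B w u & f u = (b, x)) &
        (forall u1 u2, B w u1 -> B w u2 ->
           (bruhat_le u1 u2 <-> prod_le (f u1) (f u2)))].

(* Main.v *)
Require Import Defs.
From mathcomp Require Import all_boot all_fingroup.
From mathcomp Require Import zify.
Ltac nrm := repeat match goal with
 | |- context [@isSub.val_subdef ?A ?B ?C ?D ?x] => change (@isSub.val_subdef A B C D x) with (nat_of_ord x)
 | H : context [@isSub.val_subdef ?A ?B ?C ?D ?x] |- _ => change (@isSub.val_subdef A B C D x) with (nat_of_ord x) in H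
 end.
Ltac nlia := nrm; lia.
Set Implicit Arguments. Unset Strict Implicit. Unset Printing Implicit Defensive.
Local Open Scope group_scope.

Section S.
Variable n' : nat.
Local Notation N := n'.+1.
Implicit Types (x y w v : 'S_N).

Lemma sigmaE j (m : 'I_N) : 0 < j < N ->
  val (sigma N j m) = if val m == j.-1 then j else if val m == j then j.-1 else val m.
Proof.
move=> /andP[j0 jN]; rewrite /sigma.
case: insubP => [a Ha Ea|]; last by move/negP; case; apply: leq_ltn_trans jN; apply: leq_pred.
case: insubP => [b Hb Eb|]; last by rewrite jN.
case: tpermP => [->|->|ma mb].
- by rewrite Ea Eb eqxx.
- rewrite Eb Ea eqxx; case: ifP => //; nlia.
- have ha : (val m == val a) = false by apply/eqP => /val_inj.
  have hb : (val m == val b) = false by apply/eqP => /val_inj.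
  by rewrite -Ea -Eb ha hb.
Qed.

Lemma sigmaK j : sigma N j * sigma N j = 1.
Proof.
rewrite /sigma; case: insubP => [a _ _|_]; last by rewrite mulg1.
case: insubP => [b _ _|_]; last by rewrite mulg1.
by rewrite tperm2.
Qed.

Lemma sigmaV j : (sigma N j)^-1 = sigma N j.
Proof. by apply/eqP; rewrite eq_invg_mul sigmaK. Qed.


Definition word (s : seq nat) : 'S_N := word_perm N s.
Definition valid (s : seq nat) := valid_word N s.

Lemma word_cat a b : word (a ++ b) = word b * word a.
Proof.
elim: a => [|j a IH] /=; first by rewrite mulg1.
by rewrite /word /= -/(word (a ++ b)) IH -mulgA.
Qed.

Lemma word_cons j s : word (j :: s) = word s * sigma N j.
Proof. by []. Qed.

Definition lo j : 'I_N := inord j.-1.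
Definition hi j : 'I_N := inord j.

Lemma val_lo j : 0 < j < N -> val (lo j) = j.-1.
Proof. move=> /andP[? ?]; rewrite /lo; apply: inordK; nlia. Qed.
Lemma val_hi j : 0 < j < N -> val (hi j) = j.
Proof. move=> /andP[? ?]; rewrite /hi; apply: inordK; nlia. Qed.

Lemma sig_lt j (a b : 'I_N) : 0 < j < N ->
  (val (sigma N j a) < val (sigma N j b)) =
  if (val a == j.-1) && (val b == j) then false
  else if (val a == j) && (val b == j.-1) then true else (val a < val b).
Proof.
move=> hj; rewrite !sigmaE //; move: hj => /andP[h1 h2].
case: a b => [a Ha] [b Hb] /=.
do ! (case: eqP => ? /=); nlia.
Qed.

Lemma posM j (y : 'S_N) c : ((sigma N j * y)^-1) c = sigma N j ((y^-1) c).
Proof. by rewrite invMg sigmaV permM. Qed.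

Definition inv_pair (x : 'S_N) (c d : 'I_N) :=
  (val c < val d) && (val ((x^-1) d) < val ((x^-1) c)).
Definition InvSet (x : 'S_N) := [set p : 'I_N * 'I_N | inv_pair x p.1 p.2].
Definition inv (x : 'S_N) := #|InvSet x|.
Definition incr (x : 'S_N) j := nat_of_ord (x (lo j)) < nat_of_ord (x (hi j)).

Lemma eq_posE (y : 'S_N) d (m : 'I_N) : ((y^-1) d == m) = (d == y m).
Proof.
apply/eqP/eqP => [<-|->]; by rewrite ?permKV ?permK.
Qed.

Lemma inv_step j (y : 'S_N) : 0 < j < N -> incr y j ->
  InvSet (sigma N j * y) = (y (lo j), y (hi j)) |: InvSet y /\
  (y (lo j), y (hi j)) \notin InvSet y.
Proof.
move=> hj hinc.
have El : forall m : 'I_N, (val m == j.-1) = (m == lo j).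
  by move=> m; rewrite -(inj_eq val_inj) val_lo.
have Eh : forall m : 'I_N, (val m == j) = (m == hi j).
  by move=> m; rewrite -(inj_eq val_inj) val_hi.
have lohi : lo j != hi j by rewrite -(inj_eq val_inj) val_lo // val_hi //; nlia.
have lh : y (lo j) != y (hi j) by rewrite (inj_eq perm_inj).
have hl : y (hi j) != y (lo j) by rewrite eq_sym.
move: hinc; rewrite /incr => hinc.
split.
  apply/setP => -[c d]; rewrite !inE /inv_pair /= !posM sig_lt // !El !Eh.
  rewrite -[d](permKV y) -[c](permKV y) !permK.
  move: ((y^-1) d) ((y^-1) c) => a b.
  rewrite xpair_eqE !(inj_eq perm_inj).
  have H1 : lo j <> hi j by apply/eqP.
  have H0 : nat_of_ord (lo j) < nat_of_ord (hi j) by rewrite /= val_lo // val_hi //; nlia.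
  do ! (case: eqP => [?|?]; subst => /=); try congruence; rewrite ?eqxx /= ?andbF ?andbT ?orbF /=; try nlia.
rewrite /InvSet inE /inv_pair /= !permK hinc /=.
have := val_lo hj; have := val_hi hj; rewrite /=; nlia.
Qed.


Lemma sigma_lo j : 0 < j < N -> sigma N j (lo j) = hi j.
Proof. by move=> hj; apply: val_inj; rewrite sigmaE // val_lo // eqxx val_hi. Qed.
Lemma sigma_hi j : 0 < j < N -> sigma N j (hi j) = lo j.
Proof.
move=> hj; apply: val_inj; rewrite sigmaE // val_hi // val_lo //.
move: hj => /andP[? ?]; case: ifP => [/eqP|]; [nlia|by rewrite eqxx].
Qed.

Lemma inv_up j y : 0 < j < N -> incr y j -> inv (sigma N j * y) = (inv y).+1.
Proof. by move=> hj hi; rewrite /inv; case: (inv_step hj hi) => -> H; rewrite cardsU1 H. Qed.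

Lemma sigmaKl j (y : 'S_N) : sigma N j * (sigma N j * y) = y.
Proof. by rewrite mulgA sigmaK mul1g. Qed.

Lemma incr_sigma j y : 0 < j < N -> incr (sigma N j * y) j = ~~ incr y j.
Proof.
move=> hj; rewrite /incr !permM sigma_lo // sigma_hi //.
have : y (lo j) != y (hi j).
  by rewrite (inj_eq perm_inj) -(inj_eq val_inj) val_lo // val_hi //; move: hj => /andP[? ?]; apply/eqP; nlia.
rewrite -(inj_eq val_inj) /=; move/eqP; nlia.
Qed.

Lemma inv_down j y : 0 < j < N -> ~~ incr y j -> inv y = (inv (sigma N j * y)).+1.
Proof.
move=> hj hn; rewrite -{1}(sigmaKl j y) inv_up //; by rewrite incr_sigma.
Qed.

Fixpoint incr_run (x : 'S_N) (s : seq nat) : bool :=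
  if s is j :: s' then incr x j && incr_run (sigma N j * x) s' else true.

Lemma inv_run s x : valid s ->
  inv (word s * x) + 2 * ~~ incr_run x s <= inv x + size s.
Proof.
elim: s x => [|j s IH] x; first by rewrite /word /= mul1g; nlia.
rewrite /valid /= => /andP[hj hs]; rewrite -mulgA.
have := IH (sigma N j * x) hs.
case: (boolP (incr x j)) => h /=.
  by rewrite inv_up //; case: (incr_run _ _) => /=; rewrite addnS addSn.
rewrite (inv_down hj h) /=; move: (inv (word s * _)) (incr_run _ _) => a [] /=; nlia.
Qed.


Lemma lo_val (b : 'I_N) : 0 < val b -> lo (val b) = inord (val b).-1.
Proof. by []. Qed.

Lemma mono_incr x : (forall j, 0 < j < N -> incr x j) ->
  forall a b : 'I_N, val a < val b -> val (x a) < val (x b).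
Proof.
move=> H.
suff K : forall k (a b : 'I_N), val b = val a + k.+1 -> val (x a) < val (x b).
  by move=> a b ab; apply: (K (val b - val a).-1); nlia.
elim=> [|k IH] a b Eb.
  have hb : 0 < val b < N by rewrite ltn_ord Eb; nlia.
  have := H _ hb; rewrite /incr /hi /lo inord_val.
  have -> : inord (val b).-1 = a by apply: val_inj; rewrite /= inordK; nlia.
  by [].
have hb : 0 < val b < N by rewrite ltn_ord Eb; nlia.
have := H _ hb; rewrite /incr /hi /lo inord_val.
have := IH a (inord (val b).-1); nrm; rewrite inordK; last by nlia.
move=> /(_ ltac:(nlia)); nlia.
Qed.

Lemma mono_ge (f : 'S_N) : (forall a b : 'I_N, val a < val b -> val (f a) < val (f b)) ->
  forall a : 'I_N, val a <= val (f a).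
Proof.
move=> H.
suff K : forall k (a : 'I_N), val a = k -> k <= val (f a) by move=> a; apply: K.
elim=> [|k IH] a Ea; first by [].
have hk : k < N by have := ltn_ord a; nlia.
have := IH (inord k); nrm; rewrite inordK // => /(_ erefl).
have := H (inord k) a; nrm; rewrite inordK //; move=> /(_ ltac:(nlia)); nlia.
Qed.

Lemma incr_all_id x : (forall j, 0 < j < N -> incr x j) -> x = 1.
Proof.
move=> H; have M := mono_incr H.
have Mi : forall a b : 'I_N, val a < val b -> val ((x^-1) a) < val ((x^-1) b).
  move=> a b ab; case: (ltngtP (val ((x^-1) a)) (val ((x^-1) b))) => // h.
    by have := M _ _ h; rewrite !permKV; nlia.
  by move/val_inj: h => /(congr1 x); rewrite !permKV => E; move: ab; rewrite E; nlia.
apply/permP => a; rewrite perm1; apply: val_inj; apply/eqP; rewrite eqn_leq.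
rewrite (mono_ge M) andbT.
by have := mono_ge Mi (x a); rewrite permK.
Qed.

Lemma inv1 : inv 1 = 0.
Proof.
rewrite /inv; apply/eqP; rewrite cards_eq0; apply/eqP/setP => -[c d].
by rewrite !inE /inv_pair /= invg1 !perm1; apply/negbTE; nlia.
Qed.

Lemma exists_word x : exists s, [/\ valid s, word s = x & size s = inv x].
Proof.
suff K : forall k x, inv x <= k -> exists s, [/\ valid s, word s = x & size s = inv x].
  exact: (K _ x (leqnn _)).
elim=> [|k IH] {}x hx.
  have -> : x = 1.
    apply: incr_all_id => j hj; apply: contraT => hn.
    by move: hx; rewrite (inv_down hj hn).
  by exists [::]; rewrite inv1.
case: (eqVneq x 1) => [->|nx1]; first by exists [::]; rewrite inv1.
have [j hj hn] : exists2 j, 0 < j < N & ~~ incr x j.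
  case: (pickP (fun j : 'I_N => (0 < val j) && ~~ incr x (val j))) => [j /andP[j0 hn]|none].
    by exists (val j) => //; rewrite j0 ltn_ord.
  case/eqP: nx1; apply: incr_all_id => j /andP[j0 jN].
  by have := none (Ordinal jN); rewrite /= j0 /= => /negbFE.
have E := inv_down hj hn.
have [t [vt wt st]] : exists s, [/\ valid s, word s = sigma N j * x & size s = inv (sigma N j * x)].
  by apply: IH; move: hx; rewrite E.
exists (t ++ [:: j]); split.
- by move: vt; rewrite /valid /valid_word all_cat /= hj => ->.
- by rewrite word_cat wt /word /= mul1g sigmaKl.
- by rewrite size_cat st E addn1.
Qed.

Lemma red_size x s : reduced_word x s -> size s = inv x.
Proof.
case=> vs ws min; apply/eqP; rewrite eqn_leq; apply/andP; split.
  by have [t [vt wt <-]] := exists_word x; apply: min.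
have := inv_run 1 vs; rewrite mulg1 inv1 /word ws; nlia.
Qed.

Lemma red_run x s : reduced_word x s -> incr_run 1 s.
Proof.
move=> r; have := red_size r; case: r => vs ws _ E.
have := inv_run 1 vs; rewrite mulg1 inv1 /word ws -E.
by case: (incr_run _ _) => //=; nlia.
Qed.


Lemma run_cat x s1 s2 : incr_run x (s1 ++ s2) = incr_run x s1 && incr_run (word s1 * x) s2.
Proof.
elim: s1 x => [|j s1 IH] x; first by rewrite /word /= mul1g.
rewrite cat_cons word_cons -mulgA.
by rewrite [incr_run _ (j :: _)]/= [incr_run _ (j :: s1)]/= IH andbA.
Qed.

Lemma InvSetE x c d : ((c, d) \in InvSet x) = inv_pair x c d.
Proof. by rewrite inE. Qed.

Lemma run_mono s y : valid s -> incr_run y s ->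
  forall c d, inv_pair y c d -> inv_pair (word s * y) c d.
Proof.
elim: s y => [|j s IH] y; first by rewrite /word /= mul1g.
move=> /andP[hj hs] /andP[hinc hr] c d h.
rewrite word_cons -mulgA; apply: IH => //.
case: (inv_step hj hinc) => E _; by rewrite -InvSetE E in_setU1 InvSetE h orbT.
Qed.

Lemma flip s y c d : valid s -> incr_run y s -> ~~ inv_pair y c d ->
  inv_pair (word s * y) c d ->
  exists b1 j b2, [/\ s = b1 ++ j :: b2, 0 < j < N,
     (word b1 * y) (lo j) = c & (word b1 * y) (hi j) = d].
Proof.
elim: s y => [|j s IH] y; first by rewrite /word /= mul1g => _ _ /negbTE ->.
move=> /andP[hj hs] /andP[hinc hr] hn.
rewrite word_cons -mulgA => h.
case: (boolP (inv_pair (sigma N j * y) c d)) => h2.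
  case: (inv_step hj hinc) => E _; move: h2; rewrite -InvSetE E in_setU1 InvSetE (negbTE hn) orbF.
  move/eqP => [-> ->].
  by exists [::], j, s; rewrite /word /= mul1g.
have [b1 [j' [b2 [E1 hj' E2 E3]]]] := IH _ hs hr h2 h.
exists (j :: b1), j', b2; rewrite E1 word_cons -mulgA; by split.
Qed.

Section Block.
Variable i : nat.
Hypothesis Hi : 0 < i < N.

Definition Lset x := [set c : 'I_N | nat_of_ord ((x^-1) c) < i].
Definition A0 := [set c : 'I_N | nat_of_ord c < i].

Lemma card_A0 : #|A0| = i.
Proof.
have hiN : i <= N by move: Hi => /andP[_ ?]; nlia.
have -> : A0 = widen_ord hiN @: [set: 'I_i].
  apply/setP => c; rewrite inE; apply/idP/imsetP => [ci|[m _ ->]] /=; last by [].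
  by exists (Ordinal ci); [rewrite inE | apply: val_inj].
by rewrite card_imset ?cardsT ?card_ord // => a b /(congr1 val) /= /val_inj.
Qed.

Lemma Lset_pre x : Lset x = (x^-1) @^-1: A0.
Proof. by apply/setP => c; rewrite !inE. Qed.

Lemma card_L x : #|Lset x| = i.
Proof. by rewrite Lset_pre card_preimset ?card_A0 //; apply: perm_inj. Qed.

Lemma L1 : Lset 1 = A0.
Proof. by apply/setP => c; rewrite !inE invg1 perm1. Qed.

Lemma L_other j x : 0 < j < N -> j != i -> Lset (sigma N j * x) = Lset x.
Proof.
move=> hj ji; apply/setP => c; rewrite !inE posM; nrm.
have := sigmaE ((x^-1) c) hj; nrm => ->.
move/eqP: ji => ji; move: Hi hj; move: (nat_of_ord _) => m.
case: ifP => [/eqP E|_]; [|case: ifP => [/eqP E'|_]]; nlia.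
Qed.

Lemma L_pres s x : valid s -> i \notin s -> Lset (word s * x) = Lset x.
Proof.
elim: s x => [|j s IH] x; first by rewrite /word /= mul1g.
move=> /andP[hj hs]; rewrite in_cons negb_or => /andP[ji his].
by rewrite word_cons -mulgA IH // L_other // eq_sym.
Qed.


Lemma memL x c : (c \in Lset x) = (nat_of_ord ((x^-1) c) < i).
Proof. by rewrite inE. Qed.
Lemma memA c : (c \in A0) = (nat_of_ord c < i).
Proof. by rewrite inE. Qed.

Lemma L_i x : [/\ x (lo i) \in Lset x, x (lo i) \notin Lset (sigma N i * x),
   x (hi i) \notin Lset x & x (hi i) \in Lset (sigma N i * x)].
Proof.
rewrite !memL !posM !permK sigma_lo // sigma_hi //.
have := val_lo Hi; have := val_hi Hi; nrm => -> ->; rewrite ltnn; split => //; move: Hi; nlia.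
Qed.

Lemma count_run w :
  (forall y, (forall c d, inv_pair y c d -> inv_pair w c d) -> Lset y = A0 \/ Lset y = Lset w) ->
  forall s x, valid s -> incr_run x s -> word s * x = w -> count_mem i s = (Lset x != Lset w).
Proof.
move=> TS; elim=> [|j s IH] x.
  by move=> _ _; rewrite /word /= mul1g => ->; rewrite eqxx.
move=> /andP[hj hs] /andP[hinc hr]; rewrite word_cons -mulgA => Ew.
have Hm := run_mono hs hr; rewrite Ew in Hm.
rewrite /= (IH _ hs hr Ew).
case: (eqVneq j i) => [Eji|ji]; last by rewrite L_other.
subst j.
have Hx : forall c d, inv_pair x c d -> inv_pair w c d.
  move=> c d h; apply: Hm; case: (inv_step hj hinc) => E _.
  by rewrite -InvSetE E in_setU1 InvSetE h orbT.
case: (L_i x) => h1 h2 h3 h4.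
have nxy : Lset x != Lset (sigma N i * x).
  by apply/eqP => E; move: h2; rewrite -E h1.
have [Ex|Ex] := TS x Hx; have [Ey|Ey] := TS _ Hm.
- by move: nxy; rewrite Ex Ey eqxx.
- by move: nxy; rewrite Ex Ey eqxx /= => ->.
- exfalso; move: h2 h4 hinc; rewrite Ey !memA /incr; nlia.
- by move: nxy; rewrite Ex Ey eqxx.
Qed.


Lemma crossinv y c d : nat_of_ord c < nat_of_ord d -> d \in Lset y -> c \notin Lset y -> inv_pair y c d.
Proof. rewrite !memL /inv_pair => cd hd hc; rewrite cd /=; nlia. Qed.

Lemma TS0 w : Lset w = A0 ->
  forall y, (forall c d, inv_pair y c d -> inv_pair w c d) -> Lset y = A0.
Proof.
move=> Lw y Hy; apply/eqP; rewrite eqEcard card_L card_A0 leqnn andbT.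
apply/subsetP => f hf; apply: contraT => hfA.
have : ~~ (A0 \subset Lset y).
  apply/negP => sub; have : A0 == Lset y by rewrite eqEcard sub card_L card_A0 leqnn.
  by move/eqP => E; move: hfA; rewrite E hf.
case/subsetPn => e eA eL.
have := Hy _ _ (crossinv (c := e) (d := f) _ hf eL).
move: eA hfA; rewrite !memA => eA hfA.
have H := (Hy e f); move=> /(_ ltac:(nlia)).
have : e \in Lset w by rewrite Lw memA.
have : f \notin Lset w by rewrite Lw memA.
rewrite !memL /inv_pair; nlia.
Qed.

Lemma TS w (P Q : 'I_N) : nat_of_ord P < i -> i <= nat_of_ord Q ->
  (forall c, (c \in Lset w) = ((c \in A0) && (c != P)) || (c == Q)) ->
  (forall e : 'I_N, nat_of_ord e < i -> e != P -> inv_pair w e Q -> nat_of_ord e < nat_of_ord P) ->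
  (forall f : 'I_N, i <= nat_of_ord f -> f != Q -> inv_pair w P f -> nat_of_ord Q < nat_of_ord f) ->
  forall y, (forall c d, inv_pair y c d -> inv_pair w c d) -> Lset y = A0 \/ Lset y = Lset w.
Proof.
move=> hP hQ HL W1 W2 y Hy.
have PQ : P != Q by apply/eqP => E; move: hP hQ; rewrite E; nlia.
have LP : P \notin Lset w by rewrite HL eqxx andbF (negbTE PQ).
have LQ : Q \in Lset w by rewrite HL eqxx orbT.
have Le : forall e : 'I_N, nat_of_ord e < i -> e != P -> e \in Lset w.
  by move=> e he eP; rewrite HL memA he eP.
have Lf : forall f : 'I_N, i <= nat_of_ord f -> f != Q -> f \notin Lset w.
  by move=> f hf fQ; rewrite HL memA (negbTE fQ) orbF; apply/nandP; left; nlia.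
have posw : forall c d, inv_pair w c d -> c \in Lset w -> d \notin Lset w -> False.
  by move=> c d; rewrite !memL /inv_pair; nlia.
set X := Lset y.
have mixed : forall e f : 'I_N, nat_of_ord e < i -> e != P -> e \notin X -> f \in X ->
    i <= nat_of_ord f -> f != Q -> False.
  move=> e f he eP eX fX hf fQ.
  have := Hy _ _ (crossinv (c := e) (d := f) ltac:(nlia) fX eX).
  rewrite /inv_pair => /andP[_ h]; move: (Le e he eP) (Lf f hf fQ); rewrite !memL; nlia.
have none : forall f : 'I_N, f \in X -> i <= nat_of_ord f -> f != Q -> P \notin X -> Q \notin X -> False.
  move=> f fX hf fQ PX QX.
  have h1 := W2 f hf fQ (Hy _ _ (crossinv (c := P) (d := f) ltac:(nlia) fX PX)).
  have := Hy _ _ (crossinv (c := Q) (d := f) h1 fX QX).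
  rewrite /inv_pair => /andP[_ h]; move: LQ (Lf f hf fQ); rewrite !memL; nlia.
have both : forall e : 'I_N, nat_of_ord e < i -> e != P -> e \notin X -> P \in X -> Q \in X -> False.
  move=> e he eP eX PX QX.
  have h1 := W1 e he eP (Hy _ _ (crossinv (c := e) (d := Q) ltac:(nlia) QX eX)).
  have := Hy _ _ (crossinv (c := e) (d := P) h1 PX eX).
  rewrite /inv_pair => /andP[_ h]; move: LP (Le e he eP); rewrite !memL; nlia.
have cardX : #|X| = i by rewrite card_L.
have cA : #|A0| = i by rewrite card_A0.
have cW : #|Lset w| = i by rewrite card_L.
have big : forall (B : {set 'I_N}) (f : 'I_N), #|B| = i -> f \notin B -> f |: B \subset X -> False.
  by move=> B f cB fB /subset_leq_card; rewrite cardsU1 fB cB cardX /=; nlia.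
have small : forall (B : {set 'I_N}) (e : 'I_N), #|B| = i -> e \in B -> X \subset B :\ e -> False.
  move=> B e cB eB /subset_leq_card; have := cardsD1 e B; rewrite eB cB cardX /= => ->; by rewrite add1n ltnn.
case: (boolP ((A0 :\ P) \subset X)) => [sub|/subsetPn [e he heX]].
  case: (boolP [exists f, (f \in X) && (i <= nat_of_ord f) && (f != Q)]) => [/existsP[f /andP[/andP[fX fi] fQ]]|nof].
    have fA : f \notin A0 by rewrite memA; nlia.
    exfalso; apply: (none f fX fi fQ).
      apply/negP => PX; apply: (big A0 f cA fA); apply/subsetP => c.
      rewrite in_setU1 => /orP[/eqP->//|cA0]; case: (eqVneq c P) => [->//|cP].
      by apply: (subsetP sub); rewrite in_setD1 cP.
    apply/negP => QX; apply: (big (Lset w) f cW (Lf f fi fQ)); apply/subsetP => c.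
    rewrite in_setU1 HL => /orP[/eqP->//|/orP[/andP[cA0 cP]|/eqP->//]].
    by apply: (subsetP sub); rewrite in_setD1 cP.
  have nof' : forall c, c \in X -> c != Q -> nat_of_ord c < i.
    move=> c cX cQ; apply: contraT; rewrite -leqNgt => ci.
    by move/existsP: nof; case; exists c; rewrite cX cQ ci.
  case: (boolP (P \in X)) => PX; case: (boolP (Q \in X)) => QX.
  - exfalso; apply: (big A0 Q cA); first by rewrite memA; nlia.
    apply/subsetP => c; rewrite in_setU1 => /orP[/eqP->//|cA0].
    case: (eqVneq c P) => [->//|cP]; by apply: (subsetP sub); rewrite in_setD1 cP.
  - left; apply/setP => c; apply/idP/idP => [cX|cA0].
      by rewrite memA; apply: nof' => //; apply: contraNneq QX => <-.
    case: (eqVneq c P) => [->//|cP]; by apply: (subsetP sub); rewrite in_setD1 cP.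
  - right; apply/setP => c; rewrite HL; apply/idP/idP => [cX|].
      case: (eqVneq c Q) => [->|cQ]; first by apply/orP; right.
      rewrite memA nof' //= orbF; apply: contraNneq PX => <-; exact: cX.
    case/orP => [/andP[cA0 cP]|/eqP->//].
    by apply: (subsetP sub); rewrite in_setD1 cP.
  - exfalso; apply: (small A0 P cA); first by rewrite memA.
    apply/subsetP => c cX; rewrite in_setD1 memA nof' //.
      by rewrite andbT; apply: contraNneq PX => <-.
    by apply: contraNneq QX => <-.
exfalso.
move: he; rewrite in_setD1 memA => /andP[eP he].
have nof' : forall c, c \in X -> c != Q -> nat_of_ord c < i.
  move=> c cX cQ; apply: contraT; rewrite -leqNgt => ci.
  by case: (mixed e c he eP heX cX ci cQ).
have QX : Q \in X.
  apply: contraT => QX; exfalso; apply: (small A0 e cA); first by rewrite memA.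
  apply/subsetP => c cX; rewrite in_setD1 memA nof' ?andbT //.
    by apply: contraNneq heX => <-.
  by apply: contraNneq QX => <-.
have PX : P \in X.
  apply: contraT => PX; exfalso; apply: (small (Lset w) e cW (Le e he eP)).
  apply/subsetP => c cX; rewrite in_setD1 HL.
  have -> : c != e by apply: contraNneq heX => <-.
  case: (eqVneq c Q) => [->|cQ]; first by rewrite orbT.
  by rewrite memA nof' //= orbF; apply: contraNneq PX => <-.
exact: (both e he eP heX PX QX).
Qed.

End Block.


Lemma bru_inv y y' : bruhat_le y y' -> inv y <= inv y' /\ (y != y' -> inv y < inv y').
Proof.
case=> sv [sw [rv rw sub]].
have L := size_subseq_leqif sub.
rewrite -(red_size rv) -(red_size rw); split; first by case: L.
move=> ne; rewrite ltn_neqAle; case: L => -> ->; rewrite andbT.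
apply: contra ne => /eqP E; case: rv => _ <- _; case: rw => _ <- _; by rewrite E.
Qed.

Lemma valid_cat s1 s2 : valid_word N (s1 ++ s2) = valid_word N s1 && valid_word N s2.
Proof. by rewrite /valid /valid_word all_cat. Qed.

Lemma prefix_red w s k : reduced_word w s -> reduced_word (word (take k s)) (take k s).
Proof.
case=> vs ws min; split => //.
  by move: vs; rewrite -{1}(cat_take_drop k s) valid_cat => /andP[].
move=> t vt wt.
have vd : valid_word N (drop k s) by move: vs; rewrite -{1}(cat_take_drop k s) valid_cat => /andP[].
have := min (t ++ drop k s); rewrite valid_cat vt vd size_cat => /(_ isT).
have -> : word_perm N (t ++ drop k s) = w.
  rewrite -ws -{2}(cat_take_drop k s) -!/(word _) !word_cat; congr (_ * _); exact: wt.
move=> /(_ erefl); rewrite -{1}(cat_take_drop k s) size_cat; nlia.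
Qed.

Lemma chain w v s : iso_2_times w v -> reduced_word w s -> inv w <= (inv v).+1.
Proof.
case=> f [H1 H2 H3 H4] rs.
pose u k := word (take k s).
have ru : forall k, reduced_word (u k) (take k s) by move=> k; apply: prefix_red rs.
have ule : forall k k', k <= k' -> bruhat_le (u k) (u k').
  move=> k k' kk; exists (take k s), (take k' s); split => //.
  by rewrite -(take_takel s kk) take_subseq.
have Bu : forall k, B w (u k).
  move=> k; exists (take k s), s; split => //; exact: take_subseq.
have invu : forall k, k <= size s -> inv (u k) = k.
  by move=> k ks; rewrite -(red_size (ru k)) size_take; case: ltnP => //; nlia.
have K : forall k, k <= size s -> k <= inv (f (u k)).2 + (f (u k)).1.
  elim=> [|k IH] ks; first by [].
  have ih := IH (ltnW ks).
  have /(H4 _ _ (Bu k) (Bu k.+1)) [b12 y12] := ule k k.+1 (leqnSn k).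
  have ne : f (u k) != f (u k.+1).
    apply/eqP => /(H2 _ _ (Bu k) (Bu k.+1)) E.
    by move: (invu k (ltnW ks)) (invu k.+1 ks); rewrite E => ->; nlia.
  clear IH; revert ne b12 y12 ih.
  destruct (f (u k)) as [b1 y1]; destruct (f (u k.+1)) as [b2 y2]; simpl; intros ne b12 y12 ih.
  case: (eqVneq y1 y2) => [E|ny].
    subst y2; move: ne b12 ih; case: b1; case: b2; rewrite ?eqxx //= => _ _; nlia.
  have [_ /(_ ny) lt] := bru_inv y12.
  clear ne; move: b12 ih lt; case: b1; case: b2 => //= _; nlia.
have := K (size s) (leqnn _).
have := H1 _ (Bu (size s)); case: (f (u (size s))) => b y /= /bru_inv [le _].
rewrite (red_size rs) in K *.
rewrite -(red_size rs); case: b => /=; nlia.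
Qed.


Lemma subseq_one (s1 s2 : seq nat) : subseq s1 s2 -> size s2 = (size s1).+1 ->
  exists a j b, s2 = a ++ j :: b /\ s1 = a ++ b.
Proof.
elim: s2 s1 => [|x s2 IH] [|y s1] //=.
  by move=> _ [/size0nil ->]; exists [::], x, [::].
case: eqP => [->|_] sub [E].
  have [a [j [b [-> ->]]]] := IH _ sub E.
  by exists (x :: a), j, b.
exists [::], x, s2; split => //.
by apply/eqP; rewrite -(size_subseq_leqif sub) E.
Qed.

Lemma main_case (i : nat) (Hi : 0 < i < N) (a b : seq nat) w v s :
  valid a -> valid b -> i \notin a -> i \notin b ->
  reduced_word w (a ++ i :: b) -> reduced_word v (a ++ b) ->
  reduced_word w s -> count_mem i s = 1%N.
Proof.
move=> va vb ia ib rw rv rs.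
pose A := word a; pose z := sigma N i * A.
have Ew : w = word b * z.
  by case: rw => _ <- _; rewrite -/(word _) word_cat word_cons /z mulgA.
have LA : Lset i A = A0 i by rewrite /A -(mulg1 (word a)) L_pres // L1.
have Lw : Lset i w = Lset i z by rewrite Ew L_pres.
pose P := A (lo i); pose Q := A (hi i).
have vlo := val_lo Hi; have vhi := val_hi Hi.
have El : forall m : 'I_N, (m == lo i) = (nat_of_ord m == i.-1).
  by move=> m; rewrite -(inj_eq val_inj) vlo.
have Eh : forall m : 'I_N, (m == hi i) = (nat_of_ord m == i).
  by move=> m; rewrite -(inj_eq val_inj) vhi.
have memA' : forall c, (c \in A0 i) = (nat_of_ord ((A^-1) c) < i).
  by move=> c; rewrite -LA memL.
have posz : forall c, nat_of_ord ((z^-1) c) =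
   if nat_of_ord ((A^-1) c) == i.-1 then i else if nat_of_ord ((A^-1) c) == i then i.-1
   else nat_of_ord ((A^-1) c).
  by move=> c; rewrite /z posM; have := sigmaE ((A^-1) c) Hi; nrm.
have EP : forall c, (c == P) = (nat_of_ord ((A^-1) c) == i.-1) by move=> c; rewrite -eq_posE El.
have EQ : forall c, (c == Q) = (nat_of_ord ((A^-1) c) == i) by move=> c; rewrite -eq_posE Eh.
have hP : nat_of_ord P < i.
  by have := memA' P; rewrite /P permK memA => ->; move: vlo Hi; nrm => ->; nlia.
have hQ : i <= nat_of_ord Q.
  by have := memA' Q; rewrite /Q permK memA => E; rewrite leqNgt E; move: vhi; nrm => ->; rewrite ltnn.
have HL : forall c, (c \in Lset i w) = ((c \in A0 i) && (c != P)) || (c == Q).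
  move=> c; rewrite Lw memL posz memA' EP EQ.
  move: (nat_of_ord ((A^-1) c)) => m.
  case: ifP => [/eqP E1|_]; [|case: ifP => [/eqP E2|_]]; move: Hi; nlia.
have zt : z = A * tperm P Q.
  apply/permP => m; rewrite /z !permM.
  case: (eqVneq m (lo i)) => [->|ml]; first by rewrite sigma_lo // tpermL.
  case: (eqVneq m (hi i)) => [->|mh]; first by rewrite sigma_hi // tpermR.
  have -> : sigma N i m = m.
    apply: val_inj; rewrite sigmaE //; move: ml mh; rewrite El Eh; nrm.
    by move=> /negbTE -> /negbTE ->.
  by rewrite tpermD // (inj_eq perm_inj) eq_sym.
have runw : incr_run z b.
  have := red_run rw; rewrite run_cat mulg1 => /andP[_] /= /andP[_].
  by rewrite -/(word _).
have runv : incr_run A b.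
  by have := red_run rv; rewrite run_cat mulg1 => /andP[_].
have TSw := TS Hi hP hQ HL.
have W2 : forall f : 'I_N, i <= nat_of_ord f -> f != Q -> inv_pair w P f -> nat_of_ord Q < nat_of_ord f.
  move=> f hf fQ hw.
  have nz : ~~ inv_pair z P f.
    rewrite /inv_pair negb_and; apply/orP; right; rewrite -leqNgt; nrm; rewrite !posz /P permK; move: vlo; nrm => ->; rewrite eqxx.
    have fP : f != P by apply/eqP => E; move: hf hP; rewrite E; nlia.
    move: (memA' f) fP fQ; rewrite memA EP EQ.
    by move=> E1 /negbTE -> /negbTE ->; rewrite leqNgt -E1 -leqNgt.
  rewrite Ew in hw.
  have [b1 [j [b2 [Eb hj E1 E2]]]] := flip vb runw nz hw.
  move: runv; rewrite Eb run_cat => /andP[_] /andP[inc _].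
  move: E1 E2 inc; rewrite zt mulgA !permM /incr !permM => E1 E2.
  have -> : A (word b1 (lo j)) = Q by rewrite -(tpermK P Q (A (word b1 (lo j)))) E1 tpermL.
  have -> : A (word b1 (hi j)) = f.
    rewrite -(tpermK P Q (A (word b1 (hi j)))) E2 tpermD //.
      by apply/eqP => E; move: hf hP; rewrite E; nlia.
    by rewrite eq_sym.
  by [].
have W1 : forall e : 'I_N, nat_of_ord e < i -> e != P -> inv_pair w e Q -> nat_of_ord e < nat_of_ord P.
  move=> e he eP hw.
  have nz : ~~ inv_pair z e Q.
    rewrite /inv_pair negb_and; apply/orP; right; rewrite -leqNgt; nrm; rewrite !posz /Q permK; move: vhi; nrm => ->; rewrite eqxx.
    have eQ : e != Q by apply/eqP => E; move: he hQ; rewrite E; nlia.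
    move: (memA' e) eP eQ; rewrite memA EP EQ.
    move=> E1 /negbTE -> /negbTE ->; move: he; rewrite E1 => h; case: ifP => /eqP; move: Hi; nlia.
  rewrite Ew in hw.
  have [b1 [j [b2 [Eb hj E1 E2]]]] := flip vb runw nz hw.
  move: runv; rewrite Eb run_cat => /andP[_] /andP[inc _].
  move: E1 E2 inc; rewrite zt mulgA !permM /incr !permM => E1 E2.
  have -> : A (word b1 (hi j)) = P by rewrite -(tpermK P Q (A (word b1 (hi j)))) E2 tpermR.
  have -> : A (word b1 (lo j)) = e.
    rewrite -(tpermK P Q (A (word b1 (lo j)))) E1 tpermD //; first by rewrite eq_sym.
    by apply/eqP => E; move: he hQ; rewrite E; nlia.
  by [].
have TS2 := TSw W1 W2.
case: (rs) => vs ws _.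
rewrite (count_run Hi TS2 vs (red_run rs)) ?mulg1 //.
have : P \in A0 i by rewrite memA.
have : P \notin Lset i w by rewrite HL eqxx /= andbF /=; apply/eqP => E; move: hP hQ; rewrite E; nlia.
rewrite L1; by case: eqP => // ->  /negbTE ->.
Qed.


Lemma main_N w v : bruhat_le v w -> v <> w -> iso_2_times w v ->
  forall i : nat, in_supp w i -> ~ in_supp v i ->
  forall s : seq nat, reduced_word w s -> count_mem i s = 1%N.
Proof.
move=> hb vw iso i [s0 [rs0 is0]] nsv s rs.
case: (hb) => sv [sw [rv rw sub]].
have Hi : 0 < i < N by case: rs0 => vs _ _; move/allP: vs; apply.
have c1 := chain iso rw.
have [_ /(_ (introN eqP vw)) lt] := bru_inv hb.
have Esz : size sw = (size sv).+1 by rewrite (red_size rw) (red_size rv); nlia.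
have [a [j [b [Esw Esv]]]] := subseq_one sub Esz.
have isv : i \notin sv by apply/negP => h; apply: nsv; exists sv.
move: isv; rewrite Esv mem_cat negb_or => /andP[ia ib].
have := rw; case=> vsw _ _; move: vsw; rewrite Esw valid_cat => /andP[va /andP[hj vb]].
case: (eqVneq j i) => [Eji|ji].
  subst j; have rw' : reduced_word w (a ++ i :: b) by rewrite -Esw.
  have rv' : reduced_word v (a ++ b) by rewrite -Esv.
  exact: (main_case Hi va vb ia ib rw' rv' rs).
exfalso.
have isw : i \notin sw by rewrite Esw mem_cat in_cons !negb_or ia ib (eq_sym i j) ji.
have Lw : Lset i w = A0 i.
  by case: (rw) => vsw' ws _; rewrite -ws -/(word sw) -(mulg1 (word sw)) L_pres // L1.
case: (rs0) => vs0 ws0 _.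
have := count_run Hi (fun y Hy => or_introl (TS0 Hi Lw Hy)) vs0 (red_run rs0).
rewrite mulg1 => /(_ ws0); rewrite L1 Lw eqxx => /count_memPn.
by rewrite is0.
Qed.

End S.

Theorem corollary2p2 (n : nat) (w v : 'S_n) :
  bruhat_le v w -> v <> w ->
  (forall j, in_supp v j -> in_supp w j) ->
  (exists j, in_supp w j /\ ~ in_supp v j) ->
  iso_2_times w v ->
  forall i : nat, in_supp w i -> ~ in_supp v i ->
  forall s : seq nat, reduced_word w s -> count_mem i s = 1%N.
Proof.
case: n w v => [|n'] w v hb vw _ _ iso i hw hv s rs.
  case: hw => s0 [[vs _ _] is0]; move/allP: vs => /(_ _ is0) /andP[h1 h2].
  by move: (leq_ltn_trans h1 h2).
exact: (main_N hb vw iso hw hv rs).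
Qed.
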